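(* Let $\mathcal{G}$ be a simple temporal clique and $G^-=(V,E^-)$ its minimum-edge digraph. For every directed path $(u_0,u_1,\dots,u_k)$ with $k\ge 1$ in $G^-$, the vertex sequence $u_0,u_1,\dots,u_k$ is a journey in $\mathcal{G}$.
   Context: A simple temporal clique is a pair $\mathcal{G}=(G,\lambda)$ where $G=(V,E)$ is the complete graph on a finite vertex set $V$ and $\lambda:E\to\mathbb{N}$ assigns to each edge a single integer label such that any two distinct edges sharing an endpoint have different labels. A journey from $x$ to $y$ is a sequence of vertices $x=u_0,\dots,u_k=y$ ($k\ge1$) with $\lambda(\{u_{i-1},u_i\})<\lambda(\{u_i,u_{i+1}\})$ for all $1\le i<k$. For a vertex $v$, $e^-(v)$ denotes the edge incident to $v$ with the smallest label. The minimum-edge digraph $G^-=(V,E^-)$ has an arc $(u,v)$ whenever $\{u,v\}=e^-(v)$, except that if two vertices $u,v$ satisfy $e^-(u)=e^-(v)=\{u,v\}$, only one of the two arcs $(u,v),(v,u)$ is included (chosen arbitrarily). *)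

(* Defs.v *)
From mathcomp Require Import all_boot.
Set Implicit Arguments. Unset Strict Implicit. Unset Printing Implicit Defensive.

(* A temporal clique on the finite vertex set V: the label of the edge {u,v}
   (u != v) is lam u v; lam is required symmetric on distinct vertices.
   Values lam v v are irrelevant. *)
Definition simple_temporal_clique (V : finType) (lam : V -> V -> nat) : Prop :=
  (forall u v : V, u != v -> lam u v = lam v u) /\
  (forall u v w : V, u != v -> u != w -> v != w -> lam u v != lam u w).

(* the edge {u,v} is e^-(v): the edge incident to v with the smallest label *)
Definition is_min_edge (V : finType) (lam : V -> V -> nat) (u v : V) : Prop :=
  u != v /\ forall w : V, w != v -> w != u -> lam u v < lam w v.

(* A : rel V is a minimum-edge digraph G^- of (K_V, lam): it has an arc (u,v)
   exactly when {u,v} = e^-(v), except that when e^-(u) = e^-(v) = {u,v}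
   exactly one of the arcs (u,v), (v,u) is present (arbitrary choice). *)
Definition min_edge_digraph (V : finType) (lam : V -> V -> nat) (A : rel V) : Prop :=
  (forall u v : V, A u v -> is_min_edge lam u v) /\
  (forall u v : V, is_min_edge lam u v -> ~ is_min_edge lam v u -> A u v) /\
  (forall u v : V, is_min_edge lam u v -> is_min_edge lam v u ->
     (A u v \/ A v u) /\ ~ (A u v /\ A v u)).

(* a directed path (u_0, ..., u_k), k >= 1, in the digraph A, given as
   u_0 = x and [:: u_1; ...; u_k] = p: consecutive arcs, distinct vertices *)
Definition directed_path (V : finType) (A : rel V) (x : V) (p : seq V) : Prop :=
  0 < size p /\ path A x p /\ uniq (x :: p).

(* a journey u_0 = x, u_1, ..., u_k ([:: u_1; ...; u_k] = p), k >= 1: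
   consecutive vertices are distinct (so form edges of the clique) and the
   labels of consecutive edges strictly increase *)
Fixpoint increasing_labels (V : finType) (lam : V -> V -> nat) (a b : V) (s : seq V)
  : Prop :=
  match s with
  | [::] => True
  | c :: s' => lam a b < lam b c /\ increasing_labels lam b c s'
  end.

Definition journey (V : finType) (lam : V -> V -> nat) (x : V) (p : seq V) : Prop :=
  match p with
  | [::] => False
  | y :: p' => path (fun a b : V => a != b) x p /\ increasing_labels lam x y p'
  end.

(* Main.v *)
Require Import Defs.
From mathcomp Require Import all_boot.

Lemma incr_aux (V : finType) (lam : V -> V -> nat) (A : rel V) :
  simple_temporal_clique lam ->
  min_edge_digraph lam A ->
  forall s (x y : V), path A x (y :: s) -> uniq (x :: y :: s) ->
    increasing_labels lam x y s.
Proof.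
move=> [Hsym _] [HA _]; elim=> [|c s IH] x y //=.
move=> /and3P[Axy Ayc Hp] /andP[Hx Hu]; split; last first.
  apply: IH; first by rewrite /= Ayc.
  exact: Hu.
have [nxy Hm] := HA _ _ Axy; have [nyc _] := HA _ _ Ayc.
have nxc : c != x.
  by apply/eqP=> E; move: Hx; rewrite E !inE eqxx orbT.
rewrite (Hsym y c nyc).
apply: Hm => //; by rewrite eq_sym.
Qed.

Theorem lemma2 (V : finType) (lam : V -> V -> nat) (A : rel V) :
  simple_temporal_clique lam ->
  min_edge_digraph lam A ->
  forall (x : V) (p : seq V), directed_path A x p -> journey lam x p.
Proof.
move=> Hc Hd x [|y p] [Hs [Hp Hu]]; first by []. split; last exact: (@incr_aux _ _ _ Hc Hd _ _ _ Hp Hu).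
have [HA _] := Hd.
apply: sub_path Hp => a b /HA [] //.
Qed.
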